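(* Assume the transversality condition holds at $(t^*,\bm x^* )\in I\times S$, and that PWS solutions $\bm x(t;\bm y,s)$ are Lipschitz continuous in the initial data $(\bm y,s)$. Then there exists $\epsilon>0$ such that for all $\bm y\in K^\epsilon_+:=\bar B_\epsilon(\bm x^* )\cap S$ and $(t,s)\in J^\epsilon_+:=\{(t,s)\in[t^*,t^*+\epsilon]^2: t>s\}$, the trajectory $\bm x(t;\bm y,s)$ has no transition in the time interval $(s,t^*+\epsilon]$. Furthermore, let $$M^\epsilon_+=\tfrac12\sup_{(t,s)\in J^\epsilon_+,\ \bm y\in K^\epsilon_+}\big|\dot{\bm x}(t)\cdot H_g(\bm x(t))\dot{\bm x}(t)+\nabla g(\bm x(t))\cdot\ddot{\bm x}(t)\big|,$$ where $\bm x(t)=\bm x(t;\bm y,s)$. If $0<t-s<\min\big(t^*+\epsilon-s,\ \alpha_S^2/M^\epsilon_+\big)$, then $g(\bm x(t;\bm y,s))>0$.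
   Context: Setting: $I$ bounded open interval, $U\subset\mathbb R^d$ bounded open, switching function $g\in C^2$ with $\nabla g\ne0$, $S=\{g=0\}$, $U_\pm=\{\pm g>0\}$; PWS system $\dot{\bm x}=\bm f_\pm(t,\bm x)$ on $U_\pm$, $\bm f_\pm\in C^1(I\times(U_\pm\cup S)\to\mathbb R^d)$. Transversality: nonzero $\alpha_S$ with $\nabla g(\bm x^* )\cdot\bm f_\pm(t^*,\bm x^* )\ge\alpha_S^2$ on $I\times S$. Solutions satisfy (H1) finitely many transition times (times at which $\bm x(t)\in S$); (H2) one-sided limits of $\dot{\bm x}$ at a transition equal $\bm f_\pm$ on the side in $U_\pm$; (H3) $\bm x$ is $C^2$ with bounded $\ddot{\bm x}$ away from transitions. $\bm x(t;\bm y,s)$ denotes the PWS solution with $\bm x(s)=\bm y$ (for $\bm y\in S$ and $t>s$ it evolves by $\bm f_+$). $H_g$ is the Hessian of $g$; $\bar B_\epsilon$ is a closed ball. *)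

(* Defs.v *)
From HB Require Import structures.
From mathcomp Require Import all_boot all_order all_algebra.
From mathcomp Require Import all_classical all_reals all_analysis.
Set Implicit Arguments. Unset Strict Implicit. Unset Printing Implicit Defensive.
Import Order.TTheory GRing.Theory Num.Theory.
Import numFieldNormedType.Exports.
Local Open Scope classical_set_scope.
Local Open Scope ring_scope.

Section PWS.
Variables (R : realType) (d : nat).
Notation vec := 'rV[R]_d.

(** Euclidean norm on R^d (the paper's balls are Euclidean). *)
Definition enorm (v : vec) : R := Num.sqrt (\sum_(i < d) (v ord0 i) ^+ 2).

Definition cball (x : vec) (eps : R) : set vec := [set y | enorm (y - x) <= eps].

Definition Sw (U : set vec) (g : vec -> R) : set vec := [set x | U x /\ g x = 0].
Definition Up (U : set vec) (g : vec -> R) : set vec := [set x | U x /\ 0 < g x].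
Definition Um (U : set vec) (g : vec -> R) : set vec := [set x | U x /\ g x < 0].

Definition C2_on (U : set vec) (g : vec -> R) : Prop :=
  (forall x, U x -> differentiable g x) /\
  (forall v, forall x, U x -> differentiable ('D_v g) x) /\
  (forall v w, forall x, U x -> {for x, continuous ('D_w ('D_v g))}).

(** nabla g(x) . v, written as the directional derivative *)
Definition gradv (g : vec -> R) (x v : vec) : R := 'D_v g x.
(** v . H_g(x) v, written as the second directional derivative *)
Definition hessv (g : vec -> R) (x v : vec) : R := 'D_v ('D_v g) x.

Definition C1_on_set (A : set (R * vec)) (F : R * vec -> vec) : Prop :=
  exists O : set (R * vec), open O /\ A `<=` O /\
  exists G : R * vec -> vec,
    (forall p, A p -> G p = F p) /\
    (forall p, O p -> differentiable G p) /\
    (forall w p, O p -> {for p, continuous ('D_w G)}).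

Definition PWS_solution (I : set R) (U : set vec) (g : vec -> R)
    (fp fm : R -> vec -> vec) (x : R -> vec) : Prop :=
  (forall t, I t -> U (x t)) /\
  {within I, continuous x} /\
  (forall t, I t -> Up U g (x t) -> is_derive t 1 x (fp t (x t))) /\
  (forall t, I t -> Um U g (x t) -> is_derive t 1 x (fm t (x t))) /\
  finite_set [set t | I t /\ Sw U g (x t)] /\
  (forall tau, I tau -> Sw U g (x tau) ->
     ((\forall t \near tau^'-, Up U g (x t)) ->
        derive1 x t @[t --> tau^'-] --> fp tau (x tau)) /\
     ((\forall t \near tau^'-, Um U g (x t)) ->
        derive1 x t @[t --> tau^'-] --> fm tau (x tau)) /\
     ((\forall t \near tau^'+, Up U g (x t)) ->
        derive1 x t @[t --> tau^'+] --> fp tau (x tau)) /\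
     ((\forall t \near tau^'+, Um U g (x t)) ->
        derive1 x t @[t --> tau^'+] --> fm tau (x tau))) /\
  (forall t, I t -> ~ Sw U g (x t) ->
     (\forall u \near t, derivable x u 1 /\ derivable (derive1 x) u 1) /\
     {for t, continuous (derive1 (derive1 x))}) /\
  (exists B : R, forall t, I t -> ~ Sw U g (x t) -> `|derive1 (derive1 x) t| <= B).

(** M^eps_+ of the paper, for the solution map X (X y s t = x(t; y, s)). *)
Definition Mplus (U : set vec) (g : vec -> R) (X : vec -> R -> R -> vec)
    (tst : R) (xst : vec) (eps : R) : \bar R :=
  ((2 : R)^-1)%:E * ereal_sup
    [set r : \bar R | exists t s y,
       [/\ (tst <= s)%R, (s < t)%R, (t <= tst + eps)%R,
           (cball xst eps `&` Sw U g) y &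
           r = (`| hessv g (X y s t) ((derive1 (X y s)) t)
                 + gradv g (X y s t) (derive1 (derive1 (X y s)) t) |%R)%:E]].

End PWS.

(* Main.v *)
Require Import Defs.
From HB Require Import structures.
From mathcomp Require Import all_boot all_order all_algebra.
From mathcomp Require Import all_classical all_reals all_analysis.
From mathcomp Require Import ring lra.
Import Order.TTheory GRing.Theory Num.Theory.
Import numFieldNormedType.Exports.
Local Open Scope classical_set_scope.
Local Open Scope ring_scope.
Set Implicit Arguments. Unset Strict Implicit.
Lemma chainR (R : realType) d (g : 'rV[R]_d -> R) (X : R -> 'rV[R]_d) (c : R) (v : 'rV[R]_d) :
  is_derive c (1:R) X v -> differentiable g (X c) ->
  is_derive c (1:R) (g \o X) ('D_v g (X c)).
Proof.
move=> hX hg.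
have dX : differentiable X c by apply/derivable1_diffP; case: hX.
have dgX : differentiable (g \o X) c by apply: differentiable_comp.
have -> : 'D_v g (X c) = 'D_1 (g \o X) c.
  rewrite (deriveE v hg) (deriveE (1:R) dgX) (diff_comp dX hg) /=.
  by rewrite -(deriveE (1:R) dX) derive_val.
apply: (@derivableP _ _ _ (g \o X) c (1:R)); exact/derivable1_diffP.
Qed.
Lemma Dsum (R : realType) d (g : 'rV[R]_d -> R) (x w : 'rV[R]_d) :
  differentiable g x ->
  'D_w g x = \sum_(j < d) w 0 j * 'D_(delta_mx 0 j) g x.
Proof.
move=> dg; rewrite deriveE // {1}(row_sum_delta w) linear_sum.
by apply: eq_bigr => j _; rewrite linearZ /= -deriveE.
Qed.

Lemma Hcont (R : realType) d (g : 'rV[R]_d -> R) (G : R * 'rV[R]_d -> 'rV[R]_d) p0 :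
  {for p0, continuous G} ->
  (forall j, {for p0.2, continuous ('D_(delta_mx 0 j) g)}) ->
  {for p0, continuous (fun p => \sum_(j < d) G p 0 j * 'D_(delta_mx 0 j) g p.2)}.
Proof.
move=> cG cD.
apply: (@cvg_big R _ +%R 0 predT add_continuous) => // j _.
apply: cvgM.
  exact: (continuous_comp cG (@coord_continuous R 1 d 0 j (G p0))).
apply: (continuous_comp _ (cD j)).
case: p0 {cG cD} => t x; exact: cvg_snd.
Qed.
Lemma seq_min (R : realType) (x : R) (s : seq R) :
  exists2 m, m \in x :: s & forall u, u \in x :: s -> m <= u.
Proof.
elim: s x => [|y s IH] x.
  by exists x; rewrite ?mem_seq1 // => u; rewrite mem_seq1 => /eqP ->.
have [m ms mle] := IH y.
have [xm|mx] := leP x m.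
  exists x; first by rewrite inE eqxx.
  move=> u; rewrite inE => /orP[/eqP->//|/mle]; exact: le_trans.
exists m; first by rewrite inE ms orbT.
move=> u; rewrite inE => /orP[/eqP->|/mle//]; exact: ltW.
Qed.

Lemma finite_min (R : realType) (A : set R) t :
  finite_set A -> A t -> exists m, A m /\ forall u, A u -> m <= u.
Proof.
move=> /finite_seqP[s ->] /=; case: s => [//|x s] _.
have [m ms mle] := @seq_min R x s.
by exists m; split.
Qed.
Lemma within_comp (R : realType) d (A : set R) (X : R -> 'rV[R]_d) (g : 'rV[R]_d -> R) :
  {within A, continuous X} -> (forall x, A x -> {for X x, continuous g}) ->
  {within A, continuous (g \o X)}.
Proof.
move=> /subspace_continuousP cX cg; apply/subspace_continuousP => x Ax.
exact: (continuous_cvg _ (cg x Ax) (cX x Ax)).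
Qed.

Lemma enorm0 (R : realType) d : enorm (0 : 'rV[R]_d) = 0.
Proof.
rewrite /enorm big1 ?sqrtr0 // => j _; by rewrite mxE expr0n.
Qed.

Lemma mxn_le_enorm (R : realType) d (v : 'rV[R]_d) : `|v| <= enorm v.
Proof.
have -> : `|v| = mx_norm v by [].
rewrite mx_normrE; apply/bigmax_leP; split; first exact: sqrtr_ge0.
move=> [i j] _ /=; rewrite (ord1 i) /enorm.
rewrite -(sqrtr_sqr (v 0 j)).
have h0 : 0 <= \sum_(k < d | k != j) v ord0 k ^+ 2 by apply: sumr_ge0 => k _; exact: sqr_ge0.
rewrite ler_sqrt; last by rewrite (bigD1 j) //= addr_ge0 // sqr_ge0.
by rewrite (bigD1 j) //= lerDl.
Qed.

Lemma prod_ball (R : realType) d (p q : R * 'rV[R]_d) e :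
  ball p e q <-> ball p.1 e q.1 /\ ball p.2 e q.2.
Proof. by []. Qed.
Unset Implicit Arguments. Set Strict Implicit.

Theorem lemmaB1 (R : realType) (d : nat)
  (a b : R) (U : set 'rV[R]_d) (g : 'rV[R]_d -> R)
  (fp fm : R -> 'rV[R]_d -> 'rV[R]_d) (alpha : R)
  (X : 'rV[R]_d -> R -> R -> 'rV[R]_d) (tst : R) (xst : 'rV[R]_d) :
  (* setting *)
  a < b ->
  open U -> bounded_set U ->
  C2_on U g ->
  (forall x, U x -> exists v, gradv g x v != 0) ->
  C1_on_set (`]a, b[%classic `*` (Up U g `|` Sw U g)) (fun p => fp p.1 p.2) ->
  C1_on_set (`]a, b[%classic `*` (Um U g `|` Sw U g)) (fun p => fm p.1 p.2) ->
  (* transversality on I x S *)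
  alpha != 0 ->
  (forall t x, `]a, b[%classic t -> Sw U g x ->
     alpha ^+ 2 <= gradv g x (fp t x) /\ alpha ^+ 2 <= gradv g x (fm t x)) ->
  (* X y s = x(. ; y, s) is the PWS solution on I with x(s) = y *)
  (forall y s, U y -> `]a, b[%classic s ->
     PWS_solution `]a, b[%classic U g fp fm (X y s) /\ X y s s = y) ->
  (* for y in S and t > s it evolves by f_+ *)
  (forall y s, Sw U g y -> `]a, b[%classic s ->
     (derive1 (X y s)) t @[t --> s^'+] --> fp s y) ->
  (* Lipschitz continuity in the initial data (y, s) *)
  (exists L : R, forall t s s' y y', `]a, b[%classic t -> `]a, b[%classic s -> `]a, b[%classic s' ->
     U y -> U y' ->
     enorm (X y s t - X y' s' t) <= L * (enorm (y - y') + `|s - s'|)) ->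
  (* the point (t*, x* ) *)
  `]a, b[%classic tst -> Sw U g xst ->
  exists eps : R, 0 < eps /\ tst + eps < b /\
    (forall y s t, (cball xst eps `&` Sw U g) y ->
       tst <= s -> s < t -> t <= tst + eps ->
       forall tau, s < tau -> tau <= tst + eps -> ~ Sw U g (X y s tau)) /\
    (forall y s t, (cball xst eps `&` Sw U g) y ->
       tst <= s -> s < t -> t <= tst + eps ->
       (0 < t - s /\
        ((t - s)%:E < Order.min ((tst + eps - s)%:E)
                         ((alpha ^+ 2)%:E / Mplus U g X tst xst eps))%E) ->
       0 < g (X y s t)).
Proof.
move=> ab oU bU [dg [dDg _]] _ C1p C1m anz transv sol _ [L Lip] Itst Sxst.
case: C1p => O1 [oO1 [sO1 [G1 [eG1 [dG1 _]]]]].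
case: C1m => O2 [oO2 [sO2 [G2 [eG2 [dG2 _]]]]].
have Uxst : U xst by case: Sxst.
set p0 : R * 'rV[R]_d := (tst, xst).
have Ip1 : (`]a,b[%classic `*` (Up U g `|` Sw U g)) p0 by split => //; right.
have Ip2 : (`]a,b[%classic `*` (Um U g `|` Sw U g)) p0 by split => //; right.
have cG1 : {for p0, continuous G1}.
  by apply: differentiable_continuous; apply: dG1; exact: sO1.
have cG2 : {for p0, continuous G2}.
  by apply: differentiable_continuous; apply: dG2; exact: sO2.
have cD : forall j, {for p0.2, continuous ('D_(delta_mx 0 j) g)}.
  by move=> j; apply: differentiable_continuous; exact: dDg.
pose H1 p := \sum_(j < d) G1 p 0 j * 'D_(delta_mx 0 j) g p.2.
pose H2 p := \sum_(j < d) G2 p 0 j * 'D_(delta_mx 0 j) g p.2.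
have cH1 : {for p0, continuous H1} := @Hcont R d g G1 p0 cG1 cD.
have cH2 : {for p0, continuous H2} := @Hcont R d g G2 p0 cG2 cD.
have a2 : 0 < alpha ^+ 2 by rewrite lt_def sqr_ge0 andbT expf_neq0.
have H1p0 : alpha ^+ 2 <= H1 p0.
  by rewrite /H1 -Dsum ?(eG1 _ Ip1); [exact: (transv _ _ Itst Sxst).1|exact: dg].
have H2p0 : alpha ^+ 2 <= H2 p0.
  by rewrite /H2 -Dsum ?(eG2 _ Ip2); [exact: (transv _ _ Itst Sxst).2|exact: dg].
have nH1 := cvgr_gt _ cH1 _ (lt_le_trans a2 H1p0).
have nH2 := cvgr_gt _ cH2 _ (lt_le_trans a2 H2p0).
have nH : \forall p \near p0, 0 < H1 p /\ 0 < H2 p.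
  by near=> p; split; near: p; [exact: nH1|exact: nH2].
have [e e0 hball] := (nbhs_ballP _ _).1 nH.
have nearP : forall t x, `|tst - t| < e -> `|xst - x| < e ->
    0 < H1 (t, x) /\ 0 < H2 (t, x).
  by move=> t x ht hx; apply: hball; split => /=; rewrite -ball_normE.
have [hat tb] : a < tst /\ tst < b by move: Itst; rewrite /= in_itv /= => /andP.
pose del := Order.min e (b - tst).
have del0 : 0 < del by rewrite /del lt_min e0 subr_gt0 tb.
have dele : del <= e by rewrite /del ge_min lexx.
have delb : del <= b - tst by rewrite /del ge_min lexx orbT.
pose eps := del / (2 * (`|L| + 1)).
have Lp : 0 < `|L| + 1 by have := normr_ge0 L; lra.
have eps0 : 0 < eps by rewrite divr_gt0 // mulr_gt0.
have epsL : eps * (`|L| + 1) = del / 2.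
  rewrite /eps; field; rewrite lt0r_neq0 //; lra.
have nL := normr_ge0 L.
have epsle : eps <= eps * (`|L| + 1) by nra.
have epsb : tst + eps < b by lra.
have inI : forall u, a < u -> u < b -> `]a, b[%classic u.
  by move=> u au ub; rewrite /= in_itv /= au ub.
have core : forall y s u, (cball xst eps `&` Sw U g) y -> tst <= s -> s < u ->
    u <= tst + eps -> ~ Sw U g (X y s u) ->
    exists2 D, is_derive u (1:R) (g \o X y s) D & 0 < D.
  move=> y s u [cy Sy] hs su ue nS.
  have Uy : U y by case: Sy.
  have Is : `]a,b[%classic s by apply: inI; lra.
  have Iu : `]a,b[%classic u by apply: inI; lra.
  have [[UX [cX [dp [dm _]]]] Xss] := sol y s Uy Is.
  have [_ Xuu] := sol y u Uy Iu.
  have UXu := UX u Iu.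
  have hnear : 0 < H1 (u, X y s u) /\ 0 < H2 (u, X y s u).
    apply: nearP.
      by rewrite distrC ger0_norm; lra.
    apply: (le_lt_trans (ler_distD y _ _)).
    have h1 : `|xst - y| <= eps.
      by rewrite distrC; apply: le_trans (mxn_le_enorm _) _; exact: cy.
    have h2 : `|y - X y s u| <= `|L| * eps.
      rewrite -{1}Xuu distrC; apply: le_trans (mxn_le_enorm _) _.
      apply: le_trans (Lip _ _ _ _ _ Iu Is Iu Uy Uy) _.
      rewrite subrr enorm0 add0r.
      have hL := ler_norm L.
      have hsu : `|s - u| <= eps by rewrite distrC ger0_norm; lra.
      have := normr_ge0 (s - u); nra.
    lra.
  have [hg|hg|hg] := ltgtP (g (X y s u)) 0.
  - exists ('D_(fm u (X y s u)) g (X y s u)).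
      exact: chainR (dm u Iu (conj UXu hg)) (dg _ UXu).
    rewrite -(eG2 (u, X y s u)); last by split => //; left.
    by rewrite Dsum //; [exact: hnear.2 | exact: dg].
  - exists ('D_(fp u (X y s u)) g (X y s u)).
      exact: chainR (dp u Iu (conj UXu hg)) (dg _ UXu).
    rewrite -(eG1 (u, X y s u)); last by split => //; left.
    by rewrite Dsum //; [exact: hnear.1 | exact: dg].
  - by exfalso; apply: nS.
have keyR : forall y s u, (cball xst eps `&` Sw U g) y -> tst <= s -> s < u ->
    u <= tst + eps -> (forall c, s < c -> c < u -> ~ Sw U g (X y s c)) ->
    0 < g (X y s u).
  move=> y s u hy hs su ue hc.
  have [cy Sy] := hy.
  have Uy : U y by case: Sy.
  have Is : `]a,b[%classic s by apply: inI; lra.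
  have [[UX [cX _]] Xss] := sol y s Uy Is.
  have sub : [set` `[s, u]] `<=` `]a,b[%classic.
    move=> x /=; rewrite in_itv /= => /andP[sx xu]; apply: inI; lra.
  case: (@MVT R (g \o X y s) (fun x => 'D_(1:R) (g \o X y s) x) s u su) => [x||c cin eq].
  - rewrite in_itv /= => /andP[sx xu].
    have [D dD _] := core y s x hy hs sx (ltW (lt_le_trans xu ue)) (hc x sx xu).
    have -> : 'D_(1:R) (g \o X y s) x = D by apply: derive_val.
    exact: dD.
  - apply: within_comp; first exact: continuous_subspaceW cX.
    move=> x /sub Ix; apply: differentiable_continuous; apply: dg; exact: UX.
  move: cin; rewrite in_itv /= => /andP[sc cu].
  have [D dD D0] := core y s c hy hs sc (ltW (lt_le_trans cu ue)) (hc c sc cu).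
  have eD : 'D_(1:R) (g \o X y s) c = D by apply: derive_val.
  move: eq; rewrite eD /= Xss.
  have -> : g y = 0 by case: Sy.
  rewrite subr0 => ->; apply: mulr_gt0 => //; lra.
have Q : forall y s u, (cball xst eps `&` Sw U g) y -> tst <= s -> s < u ->
    u <= tst + eps -> ~ Sw U g (X y s u).
  move=> y s u hy hs su ue Su.
  have [cy Sy] := hy.
  have Uy : U y by case: Sy.
  have Is : `]a,b[%classic s by apply: inI; lra.
  have [[_ [_ [_ [_ [fin _]]]]] _] := sol y s Uy Is.
  pose A := [set t | `]a, b[%classic t /\ Sw U g (X y s t)] `&` [set v | s < v /\ v <= u].
  have finA : finite_set A by apply: sub_finite_set fin => v [].
  have Au : A u by split; [split => //; apply: inI; lra | split => //].
  have [m [[[_ Sm] [sm mu]] mmin]] := finite_min finA Au.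
  have gm : g (X y s m) = 0 by case: Sm.
  suff : 0 < g (X y s m) by rewrite gm ltxx.
  have K := keyR y s m hy hs sm (le_trans mu ue); apply: K.
  move=> c sc cm Sc.
  have Ac : A c by split; [split => //; apply: inI; lra | split => //; lra].
  have := mmin c Ac; lra.
exists eps; split => //; split => //; split.
  move=> y s t hy hs st te tau stau taue; exact: Q.
move=> y s t hy hs st te _; apply: keyR => // c sc ct; apply: Q => //; lra.
Unshelve. all: by end_near.
Qed.
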